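(* Let $G$ and $H$ be finite abelian groups. Then $G\cong H$ if and only if there exist an integer $r\geq 1$ and integers $m_1,\dots,m_r,n_1,\dots,n_r\geq 2$ such that $\gcd(m_1,m_2,\dots,m_r)=\gcd(n_1,n_2,\dots,n_r)$ and the subgroup lattices $L(G^{m_i})$ and $L(H^{n_i})$ are isomorphic for every $i=1,\dots,r$.
   Context: For a group $K$, $L(K)$ denotes the lattice of all subgroups of $K$ ordered by inclusion, and $K^n$ denotes the direct product of $n$ copies of $K$. Isomorphism of subgroup lattices means isomorphism as lattices. *)

(* Defs.v *)
From HB Require Import structures.
From mathcomp Require Import all_boot all_fingroup.
Set Implicit Arguments. Unset Strict Implicit. Unset Printing Implicit Defensive.

(* K^n : the direct product of n copies of the finite group type K,
   realised as the group of (dependent) finite functions 'I_n -> K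
   with pointwise multiplication (gproduct.v external direct product). *)
Definition gpow (K : finGroupType) (n : nat) : finGroupType :=
  {dffun forall i : 'I_n, (fun _ => K) i}.

(* The subgroup lattices L(A) and L(B) (all subgroups of the whole group,
   ordered by inclusion) are isomorphic as lattices, i.e. there is a
   bijection between subgroups which preserves and reflects inclusion
   (an order isomorphism of lattices is a lattice isomorphism). *)
Definition subgroup_lattice_iso (A B : finGroupType) : Prop :=
  exists f : {group A} -> {group B},
    bijective f /\ forall K L : {group A}, (K \subset L) = (f K \subset f L).

(* Main.v *)
From HB Require Import structures.
Require Import Defs.
From mathcomp Require Import all_boot all_fingroup all_solvable.
Set Implicit Arguments. Unset Strict Implicit. Unset Printing Implicit Defensive.

Module MP5.


Lemma gcd_pow_eq (r : nat) (m n : 'I_r -> nat) (a b : nat) :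
  0 < r -> (forall i, 0 < m i) -> 0 < a -> 0 < b ->
  \big[gcdn/0%N]_(i < r) m i = \big[gcdn/0%N]_(i < r) n i ->
  (forall i, a ^ m i = b ^ n i) -> a = b.
Proof.
move=> r0 m0 a0 b0 eqg eqp; apply: eqn_from_log => // p.
have e i : (logn p a * m i = logn p b * n i)%N by rewrite mulnC -lognX eqp lognX mulnC.
have gm : forall c (F : 'I_r -> nat), (c * \big[gcdn/0%N]_(i < r) F i)%N = \big[gcdn/0%N]_(i < r) (c * F i)%N.
  move=> c F; apply: (big_morph (fun x => c * x)%N) => [x y|]; first by rewrite muln_gcdr.
  by rewrite muln0.
have g0 : 0 < \big[gcdn/0%N]_(i < r) m i.
  apply: (@dvdn_gt0 _ (m (Ordinal r0))); first exact: m0.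
  by rewrite (bigD1 (Ordinal r0)) //= dvdn_gcdl.
apply/eqP; rewrite -(eqn_pmul2r g0) {2}eqg !gm; apply/eqP.
by apply: eq_bigr => i _; rewrite e.
Qed.

End MP5.
Import MP5.

Module MP6.

Local Open Scope group_scope.
Definition lnO p n (gT : finGroupType) (A : {set gT}) := logn p #|'Ohm_n.+1(A) : 'Ohm_n(A)|%g.
Definition lni i p (gT : finGroupType) (A : {set gT}) := \max_(e < logn p #|A| | i < lnO p e A) e.+1.

Lemma nth_abty gT (G : {group gT}) i:
    abelian G -> i < size (abelian_type G) ->
  nth 1%N (abelian_type G) i = (\prod_(p < #|G|.+1) p ^ lni i p G)%N.
Proof.
move=> cGG.
have (p): path leq 0 (map (logn p) (rev (abelian_type G))).
  move: (abelian_type_gt1 G) (abelian_type_dvdn_sorted G).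
  case: abelian_type => //= m t; rewrite rev_cons map_rcons.
  elim: t m => //= n t IHt m /andP[/ltnW m_gt0 nt_gt1].
  rewrite -cats1 cat_path rev_cons map_rcons last_rcons /=.
  by case/andP=> /dvdn_leq_log-> // /IHt->.
have{cGG} [b defG <- b_sorted] := abelian_structure cGG.
rewrite size_map => ltib; rewrite (nth_map 1 _ _ ltib); set x := nth 1 b i.
have Gx: x \in G.
  have: x \in b by rewrite mem_nth.
  rewrite -(bigdprodWY defG); case/splitPr=> bl br.
  by rewrite mem_gen // big_cat big_cons !inE cycle_id orbT.
have lexG: #[x] <= #|G| by rewrite dvdn_leq ?order_dvdG.
rewrite -[#[x]]partn_pi // (widen_partn _ lexG) big_mkord big_mkcond.
apply: eq_bigr => p _; transitivity (p ^ logn p #[x])%N.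
  by rewrite -logn_gt0; case: posnP => // ->.
suffices lti_lnO e: (i < lnO p e G) = (e < logn p #[x]).
  congr (p ^ _)%N; apply/eqP; rewrite eqn_leq andbC; apply/andP; split.
    by apply/bigmax_leqP=> e; rewrite lti_lnO.
  have [-> //|logx_gt0] := posnP (logn p #[x]).
  have lexpG: (logn p #[x]).-1 < logn p #|G|.
    by rewrite prednK // dvdn_leq_log ?order_dvdG.
  by rewrite (bigmax_sup (Ordinal lexpG)) ?(prednK, lti_lnO).
rewrite /lnO -(count_logn_dprod_cycle _ _ defG).
case: (ltnP e) (b_sorted p) => [lt_e_x | le_x_e].
  rewrite -(cat_take_drop i.+1 b) -map_rev rev_cat !map_cat cat_path.
  case/andP=> _ ordb; rewrite count_cat ((count _ _ =P i.+1) _) ?leq_addr //.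
  rewrite -{2}(size_takel ltib) -all_count.
  move: ordb; rewrite (take_nth 1 ltib) -/x rev_rcons all_rcons /= lt_e_x.
  case/andP=> _ /=; move/(order_path_min leq_trans); apply: contraLR.
  rewrite -!has_predC !has_map; case/hasP=> y b_y /= le_y_e; apply/hasP.
  by exists y; rewrite ?mem_rev //=; apply: contra le_y_e; apply: leq_trans.
rewrite -(cat_take_drop i b) -map_rev rev_cat !map_cat cat_path.
case/andP=> ordb _; rewrite count_cat -{1}(size_takel (ltnW ltib)) ltnNge.
rewrite addnC ((count _ _ =P 0) _) ?count_size //.
rewrite eqn0Ngt -has_count; apply/hasPn=> y b_y /=; rewrite -leqNgt.
apply: leq_trans le_x_e; have ->: x = last x (rev (drop i b)).
  by rewrite (drop_nth 1 ltib) rev_cons last_rcons.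
rewrite -mem_rev in b_y; case/splitPr: (rev _) / b_y ordb => b1 b2.
rewrite !map_cat cat_path last_cat /=; case/and3P=> _ _.
move/(order_path_min leq_trans); case/lastP: b2 => // b3 x'.
by move/allP; apply; rewrite ?map_f ?last_rcons ?mem_rcons ?mem_head.
Qed.

Lemma isog_from_Ohm gT hT (G : {group gT}) (H : {group hT}) :
  abelian G -> abelian H -> #|G| = #|H| ->
  (forall k, #|'Ohm_k(G)| = #|'Ohm_k(H)|) -> G \isog H.
Proof.
move=> cGG cHH eGH eO; rewrite eq_abelian_type_isog //; apply/eqP.
have eq_sz: size (abelian_type G) = size (abelian_type H).
  rewrite !size_abelian_type // /rank eGH; apply: eq_bigr => p _.
  by rewrite !p_rank_abelian // eO.
apply: (@eq_from_nth _ 1%N) => // i lt_i_G; rewrite !nth_abty // -?eq_sz //.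
rewrite /lni eGH; apply: eq_bigr => p _; congr (p ^ _)%N.
apply: eq_bigl => e; rewrite /lnO -!divgS ?(Ohm_leq _ (leqnSn _)) //=.
by rewrite !eO.
Qed.

End MP6.
Import MP6.

Module MP3.
Local Open Scope group_scope.

Section Pow.
Variables (G : finGroupType) (m : nat).
Notation A := (gpow G m).

Lemma gpow_expg (x : A) k i : (x ^+ k) i = (x i) ^+ k.
Proof. elim: k => [|k IH]; by rewrite ?expg0 ?oneg_ffun // !expgS mulg_ffun IH. Qed.

Lemma setT_gpow : [set: A] = setXn (fun i : 'I_m => [set: G]).
Proof. by apply/setP => x; rewrite inE; symmetry; apply/setXnP => i; rewrite inE. Qed.

Lemma card_gpow : #|[set: A]| = (#|[set: G]| ^ m)%N.
Proof. by rewrite setT_gpow cardsXn prod_nat_const card_ord. Qed.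

Lemma abelian_gpow : abelian [set: G] -> abelian [set: A].
Proof.
move=> cG; apply/centsP => x _ y _; apply/ffunP => i.
by rewrite !mulg_ffun; apply: (centsP cG); rewrite inE.
Qed.

Lemma Ohm_gpow k : 'Ohm_k([set: A]) = setXn (fun i : 'I_m => 'Ohm_k([set: G])).
Proof.
apply/eqP; rewrite eqEsubset; apply/andP; split.
  rewrite gen_subG; apply/subsetP => x; rewrite !inE /= => /OhmPredP[p pp xp].
  apply/forallP => i; apply: mem_gen; rewrite !inE /=; apply/OhmPredP.
  by exists p => //; rewrite -gpow_expg xp oneg_ffun.
rewrite -setXn_prod; apply: prod_subG => i _.
rewrite -morphim_dfung1; apply: subset_trans (morphim_Ohm _ _ _) _.
  by rewrite subsetT.
by apply: OhmS; rewrite subsetT.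
Qed.

Lemma card_Ohm_gpow k : #|'Ohm_k([set: A])| = (#|'Ohm_k([set: G])| ^ m)%N.
Proof. by rewrite Ohm_gpow cardsXn prod_nat_const card_ord. Qed.

End Pow.

Definition rank2 (A : finGroupType) := forall p, prime p -> p %| #|[set: A]| ->
  exists X Y : {group A}, [/\ #|X| = p, #|Y| = p & X != Y].

Lemma rank2_gpow (G : finGroupType) m : 1 < m -> rank2 (gpow G m).
Proof.
move=> m1 p pp; rewrite card_gpow Euclid_dvdX // => /andP[pG _].
have [y _ oy] := Cauchy pp pG.
have m0 : 0 < m by apply: ltnW.
pose i0 := Ordinal m0; pose i1 := Ordinal m1.
have ord_dfung i : #[@dfung1 _ (fun _ : 'I_m => G) i y] = p.
  by rewrite (order_injm (injm_dfung1 _ _)) ?inE.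
exists <[@dfung1 _ (fun _ : 'I_m => G) i0 y]>%G, <[@dfung1 _ (fun _ : 'I_m => G) i1 y]>%G.
split; rewrite /= -?orderE ?ord_dfung //.
apply/negP => /eqP/(congr1 val) /= eqc.
have : @dfung1 _ (fun _ : 'I_m => G) i0 y \in <[@dfung1 _ (fun _ : 'I_m => G) i1 y]>.
  by rewrite -eqc cycle_id.
case/cycleP => k /(congr1 (fun z : gpow G m => z i0)).
rewrite gpow_expg dfung1_id dfung1_dflt ?expg1n => [y1|]; last by [].
by move: oy; rewrite y1 order1 => p1; rewrite -p1 in pp.
Qed.

End MP3.
Import MP3.

Module MP1.
Local Open Scope group_scope.

Lemma prime_groupP (gT : finGroupType) (K : {group gT}) :
  prime #|K| <-> (~~ (K \subset [1]) /\ forall L : {group gT}, L \subset K -> L \subset [1] \/ K \subset L).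
Proof.
split.
  move=> pK; split.
    by rewrite subG1 trivg_card_le1 -ltnNge prime_gt1.
  move=> L sLK; case/primeP: pK => _ /(_ _ (cardSg sLK)) /orP[/eqP L1|/eqP LK].
    by left; rewrite subG1 trivg_card_le1 L1.
  by right; rewrite (eqP (_ : L :==: K)) // eqEcard sLK LK leqnn.
move=> [ntK minK].
have K1 : 1 < #|K| by rewrite ltnNge -trivg_card_le1 -subG1.
have pp := pdiv_prime K1.
have [x Kx ox] := Cauchy pp (pdiv_dvd _).
have sxK : <[x]> \subset K by rewrite cycle_subG.
case: (minK _ sxK) => [|sKx].
  by rewrite subG1 trivg_card_le1 -orderE ox leqNgt prime_gt1.
have : #|K| <= #[x] by rewrite orderE subset_leq_card.
have : #[x] <= #|K| by rewrite orderE subset_leq_card.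
by rewrite ox => h1 h2; have -> : #|K| = pdiv #|K| by apply/eqP; rewrite eqn_leq h1 h2.
Qed.

Section Basic.
Variables (A B : finGroupType) (f : {group A} -> {group B}) (g : {group B} -> {group A}).
Hypotheses (fK : cancel f g) (gK : cancel g f)
  (fS : forall K L : {group A}, (K \subset L) = (f K \subset f L)).

Lemma gS_ (K L : {group B}) : (K \subset L) = (g K \subset g L).
Proof. by rewrite fS !gK. Qed.

Lemma f1 : f 1%G = 1%G.
Proof.
apply/val_inj/eqP; rewrite eqEsubset sub1G andbT.
by have := sub1G (g 1%G); rewrite fS gK.
Qed.

Lemma f_sub1 (K : {group A}) : (f K \subset [1]) = (K \subset [1]).
Proof. by have := fS K 1%G; rewrite f1 => <-. Qed.

Lemma f_prime (K : {group A}) : prime #|K| -> prime #|f K|.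
Proof.
move/prime_groupP=> [ntK minK]; apply/prime_groupP; split; first by rewrite f_sub1.
move=> L sLK; rewrite -(gK L) -fS in sLK.
case: (minK _ sLK) => h; [left|right]; first by rewrite -(gK L) f_sub1.
by rewrite -(gK L) -fS.
Qed.

Lemma f_join (K L : {group A}) : f (K <*> L)%G = (f K <*> f L)%G.
Proof.
apply/val_inj/eqP; rewrite eqEsubset; apply/andP; split; last first.
  by rewrite join_subG -!fS joing_subl joing_subr.
have := fS (K <*> L)%G (g (f K <*> f L)%G); rewrite gK => <-.
by rewrite join_subG (fS K) (fS L) gK joing_subl joing_subr.
Qed.

Lemma f_setT : f [set: A]%G = [set: B]%G.
Proof.
apply/val_inj/eqP; rewrite eqEsubset subsetT /=.
by have := fS (g [set: B]%G) [set: A]%G; rewrite gK subsetT => <-.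
Qed.

End Basic.

End MP1.
Import MP1.

Module MP2.
Local Open Scope group_scope.

Section Atoms.
Variables (gT : finGroupType).
Hypothesis cT : abelian [set: gT].

Lemma TI_prime (X Y : {group gT}) : prime #|X| -> prime #|Y| -> X != Y -> X :&: Y = 1.
Proof.
move=> pX pY nXY; apply/eqP; rewrite -subG1.
have /primeP[_ /(_ _ (cardSg (subsetIl X Y)))] := pX.
case/orP=> /eqP h; first by rewrite subG1 trivg_card_le1 h.
have sXY : X \subset Y.
  have : X :&: Y :==: X by rewrite eqEcard subsetIl h leqnn.
  by move/eqP => <-; rewrite subsetIr.
have := cardSg sXY; rewrite dvdn_prime2 // => /eqP eXY.
by case/negP: nXY; apply/eqP/val_inj/eqP; rewrite eqEcard sXY eXY leqnn.
Qed.

Lemma joinM (X Y : {group gT}) : X <*> Y = X * Y.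
Proof. by rewrite cent_joinEr // (sub_abelian_cent2 cT) ?subsetT. Qed.

Lemma card_join_prime (X Y : {group gT}) : prime #|X| -> prime #|Y| -> X != Y ->
  #|X <*> Y| = (#|X| * #|Y|)%N.
Proof. by move=> pX pY nXY; rewrite joinM TI_cardMg // TI_prime. Qed.

Lemma atoms2 (X Y : {group gT}) : prime #|X| -> prime #|Y| -> X != Y ->
  #|[set Z : {group gT} | (Z \subset X <*> Y) && prime #|Z|]| =
    if #|X| == #|Y| then (#|X|).+1 else 2.
Proof.
move=> pX pY nXY; have cE := card_join_prime pX pY nXY.
case: eqP => [eXY|neXY].
  set p := #|X|; have pp : prime p by [].
  have E2 : (X <*> Y)%G \in 'E_p^2([set: gT]).
    rewrite !inE subsetT /= cE -eXY -/p (pfactorK 2 pp) eqxx andbT.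
    apply/abelemP => //; split; first exact: abelianS (subsetT _) cT.
    move=> x /=; rewrite joinM => /mulsgP[a b Xa Yb ->].
    rewrite expgMn; last by apply: (centsP cT); rewrite inE.
    have ea : a ^+ p = 1 by apply/eqP; rewrite -order_dvdn order_dvdG.
    have eb : b ^+ p = 1 by apply/eqP; rewrite -order_dvdn /p eXY order_dvdG.
    by rewrite ea eb mulg1.
  rewrite -(card_p1Elem_p2Elem E2) p1ElemE //; apply: eq_card => Z.
  rewrite !inE; apply: andb_id2l => sZ; apply/idP/idP => [pZ|/eqP ->//].
  have := cardSg sZ; rewrite cE -eXY -/p Euclid_dvdM // orbb dvdn_prime2 //.
transitivity #|[set X; Y]|; last by rewrite cards2 nXY.
apply: eq_card => Z; rewrite !inE.
apply/idP/idP; last first.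
  by case/orP=> /eqP->; rewrite ?pX ?pY ?joing_subl ?joing_subr.
case/andP=> sZ pZ; have := cardSg sZ; rewrite cE Euclid_dvdM //.
have H (W : {group gT}) : prime #|W| -> W \subset X <*> Y -> #|Z| = #|W| -> Z == W.
  move=> pW sW eZW; apply/negPn/negP => nZW.
  have sZW : Z <*> W \subset X <*> Y by rewrite join_subG sZ sW.
  have := cardSg sZW; rewrite card_join_prime // cE eZW.
  have := cardSg sW; rewrite cE (Euclid_dvdM _ _ pW) (dvdn_prime2 pW pX) (dvdn_prime2 pW pY) => /orP[]/eqP ew.
    rewrite {1}ew dvdn_pmul2l ?prime_gt0 // (dvdn_prime2 pW pY) => /eqP eWY.
    by apply: neXY; rewrite -ew.
  rewrite {2}ew dvdn_pmul2r ?prime_gt0 // (dvdn_prime2 pW pX) => /eqP eWX.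
  by apply: neXY; rewrite -ew.
rewrite !dvdn_prime2 // => /orP[]/eqP e.
  by rewrite (H X) ?joing_subl.
by rewrite (H Y) ?joing_subr ?orbT.
Qed.
End Atoms.

End MP2.
Import MP2.

Module MP4.
Local Open Scope group_scope.

Section Atom.
Variables (A B : finGroupType) (f : {group A} -> {group B}) (g : {group B} -> {group A}).
Hypotheses (fK : cancel f g) (gK : cancel g f)
  (fS : forall K L : {group A}, (K \subset L) = (f K \subset f L)).
Hypotheses (cA : abelian [set: A]) (cB : abelian [set: B]) (RA : rank2 A).

Let gS := gS_ gK fS.

Lemma f_atom (X : {group A}) : prime #|X| -> #|f X| = #|X|.
Proof.
move=> pX; set p := #|X|.
have [X1 [X2 [o1 o2 n12]]] := RA pX (cardSg (subsetT X)).
have [Y [oY nYX]] : exists Y : {group A}, #|Y| = p /\ X != Y.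
  case: (eqVneq X X1) => [eX|nX]; last by exists X1.
  by exists X2; rewrite eX.
have pY : prime #|Y| by rewrite oY.
have nf : f X != f Y by apply: contra nYX => /eqP/(can_inj fK)->.
have := atoms2 cB (f_prime gK fS pX) (f_prime gK fS pY) nf.
have -> : [set Z : {group B} | (Z \subset f X <*> f Y) && prime #|Z|] =
    f @: [set Z : {group A} | (Z \subset X <*> Y) && prime #|Z|].
  apply/setP => Z; rewrite (can2_imset_pre _ fK gK) !inE.
  have e1 : (Z \subset f X <*> f Y) = (g Z \subset X <*> Y).
    by rewrite (fS (g Z)) gK (f_join gK fS).
  rewrite e1; congr (_ && _); apply/idP/idP => [pZ|].
    exact: (@f_prime B A g f fK gS Z pZ).
  by move=> h; rewrite -(gK Z); apply: (@f_prime A B f g gK fS (g Z) h).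
rewrite card_imset; last exact: can_inj fK.
rewrite atoms2 // oY eqxx.
case: eqP => [_ [] <- //|_ [] p1].
by move: pX; rewrite p1.
Qed.


Lemma f_proper (K L : {group A}) : (K \proper L) = (f K \proper f L).
Proof. by rewrite /proper -!fS. Qed.

Lemma f_maximal (M K : {group A}) : maximal M K -> maximal (f M) (f K).
Proof.
case/maxgroupP=> pMK maxM; apply/maxgroupP; split; first by rewrite -f_proper.
move=> H pHK sMH; rewrite -(gK H) in pHK sMH *; rewrite -f_proper in pHK.
by rewrite -fS in sMH; rewrite (val_inj (maxM _ pHK sMH)).
Qed.

Lemma f_pgroup p (K : {group A}) : prime p -> p.-group K -> p.-group (f K).
Proof.
move=> pp pK; apply/pnatP => // r pr rd.
have [y Ky oy] := Cauchy pr rd.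
have sZ : g <[y]>%G \subset K by rewrite -(fK K) -gS cycle_subG.
have pZ : prime #|g <[y]>%G|.
  by apply: (@f_prime B A g f fK gS); rewrite /= -orderE oy.
have := f_atom pZ; rewrite gK /= -orderE oy => ->.
have := pgroupS sZ pK; rewrite /pgroup pnatE // inE.
Qed.

Lemma f_card_p p (K : {group A}) : prime p -> p.-group K -> #|f K| = #|K|.
Proof.
move=> pp; elim: {K}_.+1 {-2}K (ltnSn #|K|) => // n IH K lt pK.
case: (eqVneq (K : {set A}) 1) => [K1|ntK].
  have eK : K = 1%G := val_inj K1.
  by rewrite eK (f1 gK fS) /= !cards1.
have p1K : 1%G \proper K by rewrite proper1G.
have [M maxM _] := @maxgroup_exists _ (fun H : {group A} => H \proper K) 1%G p1K.
have mM : maximal M K by [].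
have sMK : M \subset K by case/maxgroupP: maxM => /andP[].
have pM : p.-group M := pgroupS sMK pK.
have ltM : #|M| < n.
  have pMK : M \proper K by case/maxgroupP: maxM.
  by rewrite ltnS in lt; exact: leq_trans (proper_card pMK) lt.
have fmM := f_maximal mM.
have sfMK : f M \subset f K by rewrite -fS.
rewrite -(Lagrange sMK) -(Lagrange sfMK) (p_maximal_index pK mM).
by rewrite (p_maximal_index (f_pgroup pp pK) fmM) (IH M).
Qed.

Lemma part_le p (K : {group A}) : prime p -> #|K|`_p <= #|f K|`_p.
Proof.
move=> pp; have [P sylP] := Sylow_exists p K.
have [sPK pP _] := and3P sylP.
rewrite -(card_Hall sylP) -(f_card_p pp pP).
have sfP : f P \subset f K by rewrite -fS.
rewrite -(part_pnat_id (f_pgroup pp pP)).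
by apply: dvdn_leq; [apply: part_gt0 | apply: partn_dvd => //; apply: cardSg].
Qed.

End Atom.

Lemma lattice_card (A B : finGroupType) (f : {group A} -> {group B}) (g : {group B} -> {group A}) :
  cancel f g -> cancel g f -> (forall K L : {group A}, (K \subset L) = (f K \subset f L)) ->
  abelian [set: A] -> abelian [set: B] -> rank2 A -> rank2 B ->
  forall K, #|f K| = #|K|.
Proof.
move=> fK gK fS cA cB RA RB K.
have gS := gS_ gK fS.
apply: eqn_from_log => // p.
case pp : (prime p); last by rewrite (lognE p #|f K|) (lognE p #|K|) pp.
rewrite -logn_part -[in RHS]logn_part; congr (logn p _); apply/eqP; rewrite eqn_leq.
rewrite (part_le fK gK fS cA cB RA K pp) andbT.
have := part_le gK fK gS cB cA RB (f K) pp; by rewrite fK.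
Qed.


End MP4.
Import MP4.

Module MP7.
Local Open Scope group_scope.

Lemma sub_Ohm (gT : finGroupType) (K : {group gT}) p k :
  prime p -> (#|K| %| p ^ k)%N -> K \subset 'Ohm_k([set: gT]).
Proof.
move=> pp dK; apply/subsetP => x Kx; apply: mem_gen; rewrite !inE /=.
apply/OhmPredP; exists p => //; apply/eqP; rewrite -order_dvdn.
exact: dvdn_trans (order_dvdG Kx) dK.
Qed.

Lemma Ohm_le (A B : finGroupType) (f : {group A} -> {group B}) (g : {group B} -> {group A}) :
  cancel f g -> cancel g f -> (forall K L : {group A}, (K \subset L) = (f K \subset f L)) ->
  (forall K, #|f K| = #|K|) -> forall k,
  #|'Ohm_k([set: B])| <= #|'Ohm_k([set: A])|.
Proof.
move=> fK gK fS fC k.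
have sO : 'Ohm_k([set: B]) \subset f ('Ohm_k([set: A]))%G.
  rewrite gen_subG; apply/subsetP => y; rewrite !inE /= => /OhmPredP[p pp yp].
  rewrite -cycle_subG.
  have -> : <[y]> = gval (f (g <[y]>%G)) by rewrite gK.
  rewrite -fS; apply: (sub_Ohm pp).
  by have e := fC (g <[y]>%G); rewrite gK in e; rewrite -e /= -orderE order_dvdn yp eqxx.
apply: leq_trans (subset_leq_card sO) _; by rewrite fC.
Qed.

Lemma lattice_Ohm (A B : finGroupType) (f : {group A} -> {group B}) (g : {group B} -> {group A}) :
  cancel f g -> cancel g f -> (forall K L : {group A}, (K \subset L) = (f K \subset f L)) ->
  (forall K, #|f K| = #|K|) -> forall k,
  #|'Ohm_k([set: B])| = #|'Ohm_k([set: A])|.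
Proof.
move=> fK gK fS fC k; apply/eqP; rewrite eqn_leq (Ohm_le fK gK fS fC) /=.
have gS := gS_ gK fS.
have gC K : #|g K| = #|K| by rewrite -{2}(gK K) fC.
exact: (Ohm_le gK fK gS gC).
Qed.

Lemma lattice_setT (A B : finGroupType) (f : {group A} -> {group B}) (g : {group B} -> {group A}) :
  cancel f g -> cancel g f -> (forall K L : {group A}, (K \subset L) = (f K \subset f L)) ->
  (forall K, #|f K| = #|K|) -> #|[set: B]| = #|[set: A]|.
Proof.
by move=> fK gK fS fC; rewrite -(fC [set: A]%G) (f_setT gK fS).
Qed.

End MP7.
Import MP7.

Module MP8.
Local Open Scope group_scope.

Lemma isog_lattice (A B : finGroupType) (F : {morphism [set: A] >-> B}) :
  'injm F -> F @* [set: A] = [set: B] -> subgroup_lattice_iso A B.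
Proof.
move=> injF imF.
exists (fun K : {group A} => (F @* K)%G); split.
  exists (fun K : {group B} => (F @*^-1 K)%G) => K; apply/val_inj => /=.
    by rewrite injmK ?subsetT.
  by rewrite morphpreK // imF subsetT.
by move=> K L /=; rewrite injmSK ?subsetT.
Qed.

Lemma isog_gpow (gT hT : finGroupType) m :
  [set: gT] \isog [set: hT] -> subgroup_lattice_iso (gpow gT m) (gpow hT m).
Proof.
case/isogP=> phi injphi imphi.
pose F (x : gpow gT m) : gpow hT m := [ffun i => phi (x i)].
have FM : {in [set: gpow gT m] &, {morph F : x y / x * y}}.
  move=> x y _ _; apply/ffunP => i; rewrite /F !ffunE.
  by rewrite morphM ?inE.
pose Fm := Morphism FM.
apply: (@isog_lattice _ _ Fm).
  apply/injmP => x y _ _ /ffunP e; apply/ffunP => i; have := e i.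
  by rewrite !ffunE => /(injmP injphi); apply; rewrite inE.
apply/eqP; rewrite eqEsubset subsetT /=; apply/subsetP => z _.
apply/morphimP; exists [ffun i => invm injphi (z i)]; rewrite ?inE //.
apply/ffunP => i; rewrite /= /F !ffunE invmK //.
by rewrite imphi inE.
Qed.

End MP8.
Import MP8.


Theorem theorem3 (gT hT : finGroupType)
  (abG : abelian [set: gT]) (abH : abelian [set: hT]) :
  [set: gT] \isog [set: hT] <->
  exists (r : nat) (m n : 'I_r -> nat),
    [/\ 1 <= r,
        forall i, 2 <= m i /\ 2 <= n i,
        \big[gcdn/0]_(i < r) m i = \big[gcdn/0]_(i < r) n i
      & forall i, subgroup_lattice_iso (gpow gT (m i)) (gpow hT (n i))].
Proof.
split.
  move=> iso; exists 1%N, (fun _ => 2%N), (fun _ => 2%N); split => // i.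
  exact: isog_gpow.
case=> r [m [n [r1 mn eg lat]]].
have key i : (forall k, (#|('Ohm_k([set: gT]))%g| ^ m i = #|('Ohm_k([set: hT]))%g| ^ n i)%N)
    /\ (#|[set: gT]| ^ m i = #|[set: hT]| ^ n i)%N.
  have [f [[g fK gK] fS]] := lat i.
  have [m2 n2] := mn i.
  have fC := lattice_card fK gK fS (abelian_gpow (m i) abG) (abelian_gpow (n i) abH)
    (@rank2_gpow gT _ m2) (@rank2_gpow hT _ n2).
  split; last by rewrite -!card_gpow (lattice_setT fK gK fS fC).
  by move=> k; rewrite -!card_Ohm_gpow (lattice_Ohm fK gK fS fC).
have m0 i : 0 < m i by have [m2 _] := mn i; apply: leq_trans m2.
apply: (@isog_from_Ohm _ _ [set: gT]%G [set: hT]%G) => //.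
  apply: (gcd_pow_eq r1 m0 (cardG_gt0 _) (cardG_gt0 _) eg) => i.
  by case: (key i).
move=> k; apply: (gcd_pow_eq r1 m0 (cardG_gt0 _) (cardG_gt0 _) eg) => i.
by case: (key i) => ->.
Qed.
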